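(* Fix positive definite diagonal matrices $\mathbf{G}_1,\dots,\mathbf{G}_g\in\mathbb{R}^{L\times L}$, a symmetric positive semidefinite matrix $\mathbf{S}\in\mathbb{R}^{gL\times gL}$ (playing the role of $\boldsymbol{\Sigma}+\boldsymbol{\mu}\boldsymbol{\mu}^T$), and a matrix $\mathbf{B}\in\mathbb{R}^{L\times L}$. For positive definite $\mathbf{B}_1,\dots,\mathbf{B}_g\in\mathbb{R}^{L\times L}$ let $\boldsymbol{\Sigma}_0=\operatorname{diag}\{\mathbf{G}_1\mathbf{B}_1\mathbf{G}_1,\dots,\mathbf{G}_g\mathbf{B}_g\mathbf{G}_g\}$ and $Q(\{\mathbf{B}_i\}_{i=1}^g,\{\mathbf{G}_i\}_{i=1}^g)=-\tfrac12\log\det\boldsymbol{\Sigma}_0-\tfrac12\operatorname{tr}(\boldsymbol{\Sigma}_0^{-1}\mathbf{S})$. Let $\zeta:\mathbb{R}^{L\times L}\to\mathbb{R}$ be a differentiable (explicit weak constraint) function and consider the problem $\min_{\{\mathbf{B}_i\}}Q(\{\mathbf{B}_i\},\{\mathbf{G}_i\})$ subject to $\zeta(\mathbf{B}_i)=\zeta(\mathbf{B})$ for all $i=1,\dots,g$. Suppose that, for given multipliers $\lambda_1^k,\dots,\lambda_g^k\in\mathbb{R}$, the point $\{\mathbf{B}_i^{k+1}\}_{i=1}^g$ is a stationary point of the Lagrange function, i.e. $\nabla_{\mathbf{B}_i}Q(\{\mathbf{B}_i^{k+1}\}_{i=1}^g,\{\mathbf{G}_i\}_{i=1}^g)-\lambda_i^k\nabla\zeta(\mathbf{B}_i^{k+1})=0$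 for all $i$. Then there exists a (hidden weak constraint) function $\psi:\mathbb{R}^{L\times L}\to\mathbb{R}$ such that $(\{\mathbf{B}_i^{k+1}\}_{i=1}^g,\{\lambda_i^k\}_{i=1}^g)$ is a KKT pair of the problem $\min_{\{\mathbf{B}_i\}}Q(\{\mathbf{B}_i\},\{\mathbf{G}_i\})$ subject to $\psi(\mathbf{B}_i)=\psi(\mathbf{B})$ for all $i=1,\dots,g$.
   Context: A KKT pair $(\{\mathbf{B}_i\},\{\lambda_i\})$ of the equality-constrained problem $\min Q$ s.t. $\psi(\mathbf{B}_i)=\psi(\mathbf{B})$, $i=1,\dots,g$, means: $\psi(\mathbf{B}_i)=\psi(\mathbf{B})$ for all $i$ (feasibility) and $\nabla_{\mathbf{B}_i}Q(\{\mathbf{B}_i\},\{\mathbf{G}_i\})-\lambda_i\nabla\psi(\mathbf{B}_i)=0$ for all $i$ (stationarity). Gradients are taken with respect to the matrix entries. *)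

(* Defs.v *)
From HB Require Import structures.
From mathcomp Require Import all_boot all_order all_algebra.
From mathcomp Require Import all_classical all_reals all_analysis.
Set Implicit Arguments. Unset Strict Implicit. Unset Printing Implicit Defensive.
Import Order.TTheory GRing.Theory Num.Theory.
Import numFieldNormedType.Exports.
Local Open Scope ring_scope.

Section Defs.
Variable R : realType.

Definition psd_mx (n : nat) (A : 'M[R]_n) : Prop :=
  A^T = A /\ forall v : 'rV[R]_n, 0 <= (v *m A *m v^T) 0 0.

Definition pd_mx (n : nat) (A : 'M[R]_n) : Prop :=
  A^T = A /\ forall v : 'rV[R]_n, v != 0 -> 0 < (v *m A *m v^T) 0 0.

Definition is_grad (m n : nat) (f : 'M[R]_(m, n) -> R) (X Gr : 'M[R]_(m, n)) : Prop :=
  differentiable f X /\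
  forall V : 'M[R]_(m, n), 'd f X V = \sum_(a < m) \sum_(b < n) Gr a b * V a b.

Definition Sigma0 (g L : nat) (Bs Gs : 'I_g -> 'M[R]_L) :
  'M[R]_(\sum_(i < g) L)%N :=
  \mxdiag_(i < g) (Gs i *m Bs i *m Gs i).

Definition Qfun (g L : nat) (S : 'M[R]_(\sum_(i < g) L)%N)
  (Bs Gs : 'I_g -> 'M[R]_L) : R :=
  - 2^-1 * ln (\det (Sigma0 Bs Gs)) - 2^-1 * \tr (invmx (Sigma0 Bs Gs) *m S).

Definition upd (g L : nat) (Bs : 'I_g -> 'M[R]_L) (i : 'I_g) (X : 'M[R]_L) :
  'I_g -> 'M[R]_L := fun j => if j == i then X else Bs j.

Definition block_stationary (g L : nat) (S : 'M[R]_(\sum_(i < g) L)%N)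
  (Gs Bs : 'I_g -> 'M[R]_L) (c : 'M[R]_L -> R) (i : 'I_g) (lam : R) : Prop :=
  exists GQ Gc : 'M[R]_L,
    [/\ is_grad (fun X => Qfun S (upd Bs i X) Gs) (Bs i) GQ,
        is_grad c (Bs i) Gc &
        GQ - lam *: Gc = 0].

Definition KKT_pair (g L : nat) (S : 'M[R]_(\sum_(i < g) L)%N)
  (Gs : 'I_g -> 'M[R]_L) (psi : 'M[R]_L -> R) (B : 'M[R]_L)
  (Bs : 'I_g -> 'M[R]_L) (lams : 'I_g -> R) : Prop :=
  (forall i, psi (Bs i) = psi B) /\
  (forall i, block_stationary S Gs Bs psi i (lams i)).

End Defs.

(* Main.v *)
Require Import Defs.
From HB Require Import structures.
From mathcomp Require Import all_boot all_order all_algebra.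
From mathcomp Require Import all_classical all_reals all_analysis.
Import Order.TTheory GRing.Theory Num.Theory.
Import numFieldNormedType.Exports.
Set Implicit Arguments. Unset Strict Implicit.
Local Open Scope ring_scope.

Section Flat.
Variables (R : realType) (V : normedModType R).

Definition flat (f : V -> R) (x : V) := differentiable f x /\ forall v, 'd f x v = 0.

Lemma flat_cst (c : R) x : flat (fun _ => c) x.
Proof. split; first exact: differentiable_cst.
by move=> v; rewrite (_ : (fun _ => c) = cst c) // diff_cst. Qed.

Lemma dM (f g : V -> R) x v : differentiable f x -> differentiable g x ->
  'd (fun X => f X * g X) x v = f x * 'd g x v + g x * 'd f x v.
Proof. by move=> df dg; rewrite (_ : (fun X => f X * g X) = f * g) // diffM. Qed.

Lemma diffM' (f g : V -> R) x : differentiable f x -> differentiable g x ->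
  differentiable (fun X => f X * g X) x.
Proof. by move=> df dg; rewrite (_ : (fun X => f X * g X) = f * g) //; exact: differentiableM. Qed.

Lemma flatM (f g : V -> R) x : flat f x -> flat g x -> flat (fun X => f X * g X) x.
Proof. move=> [df Hf] [dg Hg]; split; first exact: diffM'.
by move=> v; rewrite dM // Hf Hg !mulr0 addr0. Qed.

Lemma flatM0 (f g : V -> R) x : flat f x -> f x = 0 -> differentiable g x ->
  flat (fun X => f X * g X) x /\ flat (fun X => g X * f X) x.
Proof. move=> [df Hf] f0 dg; split; (split; first exact: diffM');
by move=> v; rewrite dM // Hf f0 ?mulr0 ?mul0r ?addr0 ?add0r. Qed.

Lemma flat_sq (e : V -> R) x : differentiable e x -> e x = 0 -> flat (fun X => e X * e X) x.
Proof. move=> de e0; split; first exact: diffM'.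
by move=> v; rewrite dM // e0 !mul0r addr0. Qed.

Lemma diffD' (f g : V -> R) x : differentiable f x -> differentiable g x ->
  differentiable (fun X => f X + g X) x /\
  forall v, 'd (fun X => f X + g X) x v = 'd f x v + 'd g x v.
Proof. move=> df dg; rewrite (_ : (fun X => f X + g X) = f + g) //; split.
  exact: differentiableD.
by move=> v; rewrite diffD. Qed.

Lemma sum_diff (I : Type) (s : seq I) (F : I -> V -> R) x :
  (forall j, differentiable (F j) x) ->
  differentiable (fun X => \sum_(j <- s) F j X) x.
Proof.
move=> H; elim: s => [|a s IH].
  rewrite (_ : (fun X => _) = fun _ => 0); first exact: differentiable_cst.
  by apply: funext => X; rewrite big_nil.
rewrite (_ : (fun X => _) = fun X => F a X + \sum_(j <- s) F j X).
  by have [] := diffD' (H a) IH.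
by apply: funext => X; rewrite big_cons.
Qed.

Lemma sum_flat (I : Type) (s : seq I) (F : I -> V -> R) x :
  (forall j, flat (F j) x) -> flat (fun X => \sum_(j <- s) F j X) x.
Proof.
move=> H; elim: s => [|a s IH].
  rewrite (_ : (fun X => _) = fun _ => 0); first exact: flat_cst.
  by apply: funext => X; rewrite big_nil.
rewrite (_ : (fun X => _) = fun X => F a X + \sum_(j <- s) F j X); last first.
  by apply: funext => X; rewrite big_cons.
have [da Ha] := H a; have [ds Hs] := IH.
have [dd Hd] := diffD' da ds; split => // v.
by rewrite Hd Ha Hs addr0.
Qed.

Lemma prod_diff (I : Type) (s : seq I) (F : I -> V -> R) x :
  (forall j, differentiable (F j) x) ->
  differentiable (fun X => \prod_(j <- s) F j X) x.
Proof.
move=> H; elim: s => [|a s IH].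
  rewrite (_ : (fun X => _) = fun _ => 1); first exact: differentiable_cst.
  by apply: funext => X; rewrite big_nil.
rewrite (_ : (fun X => _) = fun X => F a X * \prod_(j <- s) F j X).
  exact: diffM'.
by apply: funext => X; rewrite big_cons.
Qed.

Lemma prod_flat (I : Type) (s : seq I) (F : I -> V -> R) x :
  (forall j, flat (F j) x) -> flat (fun X => \prod_(j <- s) F j X) x.
Proof.
move=> H; elim: s => [|a s IH].
  rewrite (_ : (fun X => _) = fun _ => 1); first exact: flat_cst.
  by apply: funext => X; rewrite big_nil.
rewrite (_ : (fun X => _) = fun X => F a X * \prod_(j <- s) F j X).
  exact: flatM.
by apply: funext => X; rewrite big_cons.
Qed.

Lemma prod_flat0 (I : eqType) (s : seq I) (F : I -> V -> R) x j0 :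
  j0 \in s -> flat (F j0) x -> F j0 x = 0 -> (forall j, differentiable (F j) x) ->
  flat (fun X => \prod_(j <- s) F j X) x.
Proof.
move=> + fl f0 H; elim: s => [//|a s IH].
rewrite (_ : (fun X => _) = fun X => F a X * \prod_(j <- s) F j X); last first.
  by apply: funext => X; rewrite big_cons.
rewrite inE => /orP [/eqP <-|js].
  by have [] := flatM0 fl f0 (prod_diff s H).
have [fsd fsv] := IH js.
split; first exact: diffM'.
move=> v; rewrite dM //.
have -> : \prod_(j <- s) F j x = 0 by rewrite (big_rem j0) //= f0 mul0r.
by rewrite fsv mulr0 mul0r addr0.
Qed.
End Flat.

Section Aff.
Variables (R : realType) (V : normedModType R).
Lemma aff_diff (f : V -> R) (c : R) x : differentiable f x ->
  differentiable (fun X => 1 - f X / c) x.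
Proof.
move=> df; rewrite (_ : (fun X => _) = fun X => (fun _ => 1) X + (fun X => (fun _ => - c^-1) X * f X) X); last first.
  by apply: funext => X; rewrite mulNr mulrC.
have [] := diffD' (differentiable_cst (1:R) x) (diffM' (differentiable_cst (- c^-1) x) df) => //.
Qed.
Lemma aff_flat (f : V -> R) (c : R) x : flat f x -> flat (fun X => 1 - f X / c) x.
Proof.
move=> ff; rewrite (_ : (fun X => _) = fun X => (fun _ => 1) X + (fun X => (fun _ => - c^-1) X * f X) X); last first.
  by apply: funext => X; rewrite mulNr mulrC.
have [f1 f1v] := flat_cst (1:R) x; have [f2 f2v] := flatM (flat_cst (- c^-1) x) ff.
have [dd ddv] := diffD' f1 f2; split => // v; by rewrite ddv f1v f2v addr0.
Qed.
End Aff.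

Section Mat.
Variables (R : realType) (L : nat).
Definition d2 (P X : 'M[R]_L) : R :=
  \sum_(a < L) \sum_(b < L) ((X a b - P a b) * (X a b - P a b)).

Lemma e_diff (P x : 'M[R]_L) a b : differentiable (fun X : 'M[R]_L => X a b - P a b) x.
Proof.
rewrite (_ : (fun X : 'M[R]_L => X a b - P a b) = (fun X : 'M[R]_L => X a b) \- cst (P a b)) //.
apply: differentiableB; [exact: differentiable_coord | exact: differentiable_cst].
Qed.

Lemma d2_diff P x : differentiable (d2 P) x.
Proof.
apply: sum_diff => a; apply: sum_diff => b; apply: diffM'; exact: e_diff.
Qed.

Lemma d2_flat P : flat (d2 P) P.
Proof.
apply: sum_flat => a; apply: sum_flat => b; apply: flat_sq; first exact: e_diff.
by rewrite subrr.
Qed.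

Lemma d2_self P : d2 P P = 0.
Proof. by apply: big1 => a _; apply: big1 => b _; rewrite subrr mulr0. Qed.

Lemma d2_eq0 P X : d2 P X = 0 -> X = P.
Proof.
rewrite /d2 => H; apply/matrixP => a b.
have Ha a' : \sum_(b < L) (X a' b - P a' b) * (X a' b - P a' b) = 0.
  by apply: (psumr_eq0P _ H) => // c _; apply: sumr_ge0 => d _; exact: sqr_ge0.
have Hb : (X a b - P a b) * (X a b - P a b) = 0.
  by apply: (psumr_eq0P _ (Ha a)) => // c _; exact: sqr_ge0.
by move: Hb => /eqP; rewrite mulf_eq0 orbb subr_eq0 => /eqP.
Qed.
End Mat.

Theorem proposition1 (R : realType) (g L : nat)
  (Gs : 'I_g -> 'M[R]_L) (S : 'M[R]_(\sum_(i < g) L)%N) (B : 'M[R]_L)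
  (zeta : 'M[R]_L -> R) (Bk1 : 'I_g -> 'M[R]_L) (lamk : 'I_g -> R) :
  (forall i, is_diag_mx (Gs i) /\ pd_mx (Gs i)) ->
  psd_mx S ->
  (forall X, differentiable zeta X) ->
  (forall i, pd_mx (Bk1 i)) ->
  (forall i, block_stationary S Gs Bk1 zeta i (lamk i)) ->
  exists psi : 'M[R]_L -> R,
    (forall X, differentiable psi X) /\ KKT_pair S Gs psi B Bk1 lamk.
Proof.
move=> _ _ dz _ Hst.
pose pt (j : option 'I_g) := if j is Some k then Bk1 k else B.
pose fac i j : 'M[R]_L -> R := if pt j == Bk1 i then (fun _ => 1) else
  (fun X => (1 - d2 (Bk1 i) X / d2 (Bk1 i) (pt j)) * (1 - d2 (Bk1 i) X / d2 (Bk1 i) (pt j))).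
pose u i X := \prod_(j : option 'I_g) fac i j X.
pose m j : R := \sum_(i < g) (Bk1 i == Bk1 j)%:R.
pose w i := (zeta B - zeta (Bk1 i)) / m i.
pose h X := \sum_(i < g) (fun _ => w i) X * u i X.
have fac_diff i j x : differentiable (fac i j) x.
  rewrite /fac; case: ifP => _; first exact: differentiable_cst.
  apply: diffM'; apply: aff_diff; exact: d2_diff.
have u_diff i x : differentiable (u i) x by apply: prod_diff.
have h_diff x : differentiable h x.
  apply: sum_diff => i; apply: diffM' => //; exact: differentiable_cst.
have u_val i k : u i (pt k) = (pt k == Bk1 i)%:R.
  case: eqP => [E|NE].
    apply: big1 => j _; rewrite /fac; case: ifP => // _.
    by rewrite E d2_self mul0r subr0 mulr1.
  rewrite /u (bigD1 k) //= /fac; case: ifP => [/eqP//|_].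
  rewrite divff ?subrr ?mul0r //.
  by apply/eqP => /d2_eq0.
have u_flat i j : flat (u i) (Bk1 j).
  case: (Bk1 j =P Bk1 i) => [E|NE].
    rewrite E; apply: prod_flat => k; rewrite /fac; case: ifP => _.
      exact: flat_cst.
    apply: flatM; apply: aff_flat; exact: d2_flat.
  apply: (@prod_flat0 _ _ _ _ _ _ (Some j)) => //.
  - by rewrite mem_index_enum.
  - rewrite /fac /=; case: ifP => [/eqP//|_].
    apply: flat_sq; first by apply: aff_diff; exact: d2_diff.
    by rewrite divff ?subrr //; apply/eqP => /d2_eq0.
  - rewrite /fac /=; case: ifP => [/eqP//|_].
    by rewrite divff ?subrr ?mul0r //; apply/eqP => /d2_eq0.
have h_flat j : flat h (Bk1 j).
  apply: sum_flat => i; apply: flatM => //; exact: flat_cst.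
have m_ge1 j : 1 <= m j.
  rewrite /m (bigD1 j) //= eqxx -[X in X <= _]addr0 lerD2l.
  by apply: sumr_ge0 => i _; exact: ler0n.
have m_neq0 j : m j != 0 by rewrite gt_eqF // (lt_le_trans ltr01).
have h_Bk j : h (Bk1 j) = zeta B - zeta (Bk1 j).
  rewrite /h; under eq_bigr => i _ do rewrite (u_val i (Some j)) /=.
  transitivity (\sum_(i < g) (zeta B - zeta (Bk1 j)) / m j * (Bk1 i == Bk1 j)%:R).
    apply: eq_bigr => i _; rewrite eq_sym; case: eqP => [E|_]; last by rewrite !mulr0.
    by rewrite /w /m E.
  transitivity ((zeta B - zeta (Bk1 j)) / m j * m j); last by rewrite mulfVK.
  by rewrite [in RHS]/m mulr_sumr.
have h_B : h B = 0.
  rewrite /h; apply: big1 => i _; rewrite (u_val i None) /=.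
  case: eqP => [E|_]; last by rewrite mulr0.
  by rewrite /w E subrr mul0r mul0r.
exists (fun X => zeta X + h X); split.
  by move=> X; have [] := diffD' (dz X) (h_diff X).
split.
  by move=> i; rewrite h_Bk h_B addr0 addrC subrK.
move=> i; have [GQ [Gc [HQ [dzi Hz] E]]] := Hst i.
exists GQ, Gc; split => //; split.
  by have [] := diffD' (dz (Bk1 i)) (h_diff (Bk1 i)).
move=> v; have [_ ->] := diffD' (dz (Bk1 i)) (h_diff (Bk1 i)).
by rewrite (proj2 (h_flat i)) addr0 Hz.
Qed.
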